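(* Let $\mathbf{k}$ be a commutative unital ring, $R$ a $\mathbf{k}$-algebra, $\lambda,\kappa\in\mathbf{k}$, and $P$ an extended Rota-Baxter operator of weight $(\lambda,\kappa)$ on $R$. Let $\tilde P:=-\lambda\,\mathrm{id}_R-P$. (1) For all $u,v\in R$, $$P(u)\tilde P(v)=P(u\tilde P(v))+\tilde P(P(u)v)-\kappa uv,\qquad \tilde P(u)P(v)=\tilde P(uP(v))+P(\tilde P(u)v)-\kappa uv.$$ (2) For all $a,b\in\mathbf{k}$, the operator $Q:=aP+b\tilde P$ is an extended Rota-Baxter operator of weight $\big(\lambda(a+b),\ ab\lambda^2+(a-b)^2\kappa\big)$.
   Context: For $\lambda,\kappa\in\mathbf{k}$, an extended Rota-Baxter operator of weight $(\lambda,\kappa)$ on a $\mathbf{k}$-algebra $R$ is a $\mathbf{k}$-linear map $P:R\to R$ such that $P(x)P(y)=P(xP(y))+P(P(x)y)+\lambda P(xy)+\kappa xy$ for all $x,y\in R$. *)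

(* Defs.v *)
From mathcomp Require Import all_boot all_algebra.
Set Implicit Arguments. Unset Strict Implicit. Unset Printing Implicit Defensive.
Import GRing.Theory.
Local Open Scope ring_scope.

Definition extended_RB (k : comRingType) (R : algType k) (lam kap : k)
  (P : R -> R) : Prop :=
  linear P /\
  forall x y : R,
    P x * P y = P (x * P y) + P (P x * y) + lam *: P (x * y) + kap *: (x * y).

Definition tildeP (k : comRingType) (R : algType k) (lam : k) (P : R -> R)
  : R -> R := fun x => - (lam *: x) - P x.

(* Main.v *)
Require Import Defs.
From mathcomp Require Import all_boot all_algebra.
From mathcomp.algebra_tactics Require Import ring.
Import GRing.Theory.
Local Open Scope ring_scope.

Section Lin.
Variables (k : comRingType) (V : lmodType k).

Definition lin (s : seq V) (c : nat -> k) : V :=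
  \sum_(i < size s) c i *: s`_i.
Definition dl (j : nat) : nat -> k := fun i => if i == j then 1 else 0.

Lemma atomE (s : seq V) j : (j < size s)%N -> s`_j = lin s (dl j).
Proof.
move=> hj; rewrite /lin (bigD1 (Ordinal hj)) //= big1 ?addr0 /dl ?eqxx ?scale1r //.
by move=> i /negPf; rewrite -val_eqE /= => ->; rewrite scale0r.
Qed.

Lemma linD s c d : lin s c + lin s d = lin s (fun i => c i + d i).
Proof. by rewrite /lin -big_split /=; apply: eq_bigr => i _; rewrite scalerDl. Qed.
Lemma linZ s a c : a *: lin s c = lin s (fun i => a * c i).
Proof. by rewrite /lin scaler_sumr; apply: eq_bigr => i _; rewrite scalerA. Qed.
Lemma linN s c : - lin s c = lin s (fun i => - c i).
Proof. by rewrite /lin -sumrN; apply: eq_bigr => i _; rewrite scaleNr. Qed.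
Lemma linE s c d : (forall i, (i < size s)%N -> c i = d i) -> lin s c = lin s d.
Proof. by move=> H; apply: eq_bigr => i _; rewrite H. Qed.
End Lin.

Section Lemmas.
Variables (k : comRingType) (R : algType k) (P : R -> R).
Hypothesis HL : linear P.
Lemma P0 : P 0 = 0.
Proof.
have := HL 1 0 0; rewrite !scale1r addr0 => H.
have := congr1 (fun z => z - P 0) H; rewrite /= addrK subrr => E; by rewrite -E.
Qed.
Lemma PD x y : P (x + y) = P x + P y.
Proof. by rewrite -{1}(scale1r x) HL scale1r. Qed.
Lemma PZ a x : P (a *: x) = a *: P x.
Proof. by rewrite -(addr0 (a *: x)) HL P0 addr0. Qed.
Lemma PN x : P (- x) = - P x.
Proof. by rewrite -scaleN1r PZ scaleN1r. Qed.
Lemma PB x y : P (x - y) = P x - P y.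
Proof. by rewrite PD PN. Qed.
End Lemmas.
Arguments P0 {k R P}.
Arguments PD {k R P}.
Arguments PZ {k R P}.
Arguments PN {k R P}.
Arguments PB {k R P}.
Arguments atomE {k V}.
Arguments lin {k V}.
Arguments dl {k}.

Ltac expand HL :=
  rewrite ?(mulrDl, mulrDr, mulrN, mulNr, mulrBl, mulrBr, PD HL, PN HL,
            PB HL, PZ HL, scalerDr, scalerN, scalerBr);
  do 5 (rewrite -?scalerAl -?scalerAr ?(mulrDl, mulrDr, mulrN, mulNr, mulrBl,
     mulrBr, PD HL, PN HL, PB HL, PZ HL, scalerDr, scalerN, scalerBr)).

Ltac fin s :=
  rewrite ?(linZ, linN, linD); apply: linE; rewrite /s /=;
  do 8 (case=> [_|]; first by rewrite /dl /=; ring); done.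

Ltac at1 s a j := rewrite (_ : a = lin s (dl j)); last exact: (@atomE _ _ s j).

Ltac go2 a b := let s := fresh "s" in pose s := [:: a; b];
  at1 s a 0%N; at1 s b 1%N; fin s.
Ltac go4 a b c d := let s := fresh "s" in pose s := [:: a; b; c; d];
  at1 s a 0%N; at1 s b 1%N; at1 s c 2%N; at1 s d 3%N; fin s.
Ltac go5 a b c d e := let s := fresh "s" in pose s := [:: a; b; c; d; e];
  at1 s a 0%N; at1 s b 1%N; at1 s c 2%N; at1 s d 3%N; at1 s e 4%N; fin s.
Ltac go6 a b c d e f := let s := fresh "s" in pose s := [:: a; b; c; d; e; f];
  at1 s a 0%N; at1 s b 1%N; at1 s c 2%N; at1 s d 3%N; at1 s e 4%N; at1 s f 5%N; fin s.

Theorem corollary2p5 (k : comRingType) (R : algType k) (lam kap : k)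
  (P : R -> R) :
  extended_RB lam kap P ->
  (forall u v : R,
     P u * tildeP lam P v
       = P (u * tildeP lam P v) + tildeP lam P (P u * v) - kap *: (u * v)
   /\ tildeP lam P u * P v
       = tildeP lam P (u * P v) + P (tildeP lam P u * v) - kap *: (u * v))
  /\
  (forall a b : k,
     extended_RB (lam * (a + b)) (a * b * lam ^+ 2 + (a - b) ^+ 2 * kap)
       (fun x => a *: P x + b *: tildeP lam P x)).
Proof.
move=> [HL HRB]; split.
  move=> u v; rewrite /tildeP; split.
  - expand HL; rewrite HRB.
    move: (u * v) (P u * v) (P (u * v)) (P (P u * v)) (P (u * P v))
      => A5 A4 A3 A2 A1.
    pose s := [:: A1; A2; A3; A4; A5].
    have e1 : A1 = lin s (dl 0) by exact: (@atomE _ _ s 0).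
    have e2 : A2 = lin s (dl 1) by exact: (@atomE _ _ s 1).
    have e3 : A3 = lin s (dl 2) by exact: (@atomE _ _ s 2).
    have e4 : A4 = lin s (dl 3) by exact: (@atomE _ _ s 3).
    have e5 : A5 = lin s (dl 4) by exact: (@atomE _ _ s 4).
    rewrite e1 e2 e3 e4 e5.
    fin s.
  - expand HL; rewrite HRB.
    move: (u * v) (u * P v) (P (u * v)) (P (P u * v)) (P (u * P v))
      => A5 A4 A3 A2 A1.
    go5 A1 A2 A3 A4 A5.
have EQ : forall a b x, a *: P x + b *: tildeP lam P x
    = (a - b) *: P x + (- (b * lam)) *: x.
  move=> a b x; rewrite /tildeP; expand HL.
  move: x (P x) => A1 A2; go2 A1 A2.
move=> a b; split.
  move=> c x y /=; rewrite !EQ; expand HL.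
  move: x y (P x) (P y) => A1 A2 A3 A4; go4 A1 A2 A3 A4.
move=> x y /=; rewrite !EQ; expand HL; rewrite HRB.
move: (x * y) (x * P y) (P x * y) (P (x * y)) (P (P x * y)) (P (x * P y))
  => A1 A2 A3 A4 A5 A6.
go6 A1 A2 A3 A4 A5 A6.
Qed.
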